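(* Let $p$ be an odd prime, let $0<s<p-1$ be an integer, and let $0<a,a'<p$ be integers with $a'\equiv sa\pmod p$. Then $b_{1,s}(a)=0$ in $\mathbb F_p$ (evaluating at $a$ viewed as an element of $\mathbb F_p$) if and only if $a+a'<p$.
   Context: $\mathbb F_p$ is the field of $p$ elements, $\alpha$ an indeterminate, $\binom{x}{m}=x(x-1)\cdots(x-m+1)/m!$. For integers $0<r,s<p$ (interpreted as elements of $\mathbb F_p$), $b_{r,s}(\alpha)=\sum_{k=0}^{p-1}(-r/s)^k\binom{r\alpha-1}{p-1-k}\binom{s\alpha-1}{k}\in\mathbb F_p[\alpha]$. *)

(* Defs.v *)
From HB Require Import structures.
From mathcomp Require Import all_boot all_order all_algebra.
Set Implicit Arguments. Unset Strict Implicit. Unset Printing Implicit Defensive.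
Import GRing.Theory.
Local Open Scope ring_scope.

Definition polybinom (F : fieldType) (x : {poly F}) (m : nat) : {poly F} :=
  (m`!%:R)^-1 *: \prod_(i < m) (x - (i%:R)%:P).

Definition bpoly (p r s : nat) : {poly 'F_p} :=
  \sum_(k < p) ((- ((r%:R : 'F_p) / s%:R)) ^+ k) *:
     (polybinom (r%:R *: 'X - 1) (p.-1 - k) * polybinom (s%:R *: 'X - 1) k).

(* Main.v *)
Require Import Defs.
From mathcomp Require Import all_boot all_order all_algebra.
From mathcomp Require Import ring zify.
Import GRing.Theory.
Local Open Scope ring_scope.

Lemma Fp_eq0 p n : prime p -> ((n%:R : 'F_p) == 0) = (p %| n)%N.
Proof. by move=> pp; rewrite -val_eqE /= val_Fp_nat. Qed.

Lemma ndvd_fact p m : prime p -> (m < p)%N -> ~~ (p %| m`!)%N.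
Proof.
move=> pp; elim: m => [|m IH] lt.
  by rewrite fact0 dvdn1; apply/eqP => e; rewrite e in pp.
rewrite factS Euclid_dvdM // negb_or IH ?andbT; last by lia.
by apply/negP => /dvdn_leq => /(_ isT); lia.
Qed.

Arguments ndvd_fact {p m}.

Lemma prod_ffact (F : comNzRingType) (n m : nat) :
  \prod_(i < m) (n%:R - i%:R : F) = (n ^_ m)%:R.
Proof.
elim: m => [|m IH]; first by rewrite big_ord0 ffactn0.
rewrite big_ord_recr /= IH ffactnSr natrM.
case: (leqP m n) => h; first by rewrite natrB.
by rewrite ffact_small // !mul0r.
Qed.

Lemma binomF p (n m : nat) : prime p -> (m < p)%N ->
  ((m`!%:R)^-1 * \prod_(i < m) (n%:R - i%:R) : 'F_p) = 'C(n, m)%:R.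
Proof.
move=> pp lt; rewrite prod_ffact -bin_ffact natrM mulrC -mulrA divff ?mulr1 //.
by rewrite Fp_eq0 // ndvd_fact.
Qed.

Lemma bin_nz p B k : prime p -> (B < p)%N -> (k <= B)%N -> ('C(B, k)%:R : 'F_p) != 0.
Proof.
move=> pp lt le; rewrite Fp_eq0 //; apply/negP => d.
have := ndvd_fact pp lt; rewrite -(bin_fact le).
by rewrite (dvdn_mulr _ d).
Qed.

Lemma bin_z n j : (j <= n.*2)%N -> j != n -> prime n.+1 ->
  ('C(j, n)%:R : 'F_n.+1) = 0.
Proof.
move=> le ne pp; case: (ltnP j n) => h; first by rewrite bin_small.
apply/eqP; rewrite Fp_eq0 //.
have d : (n.+1 %| j`!)%N by apply: dvdn_fact; lia.
move: d; rewrite -(bin_fact h) Euclid_dvdM // Euclid_dvdM //.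
rewrite (negbTE (ndvd_fact pp _)) // (negbTE (ndvd_fact pp _)) ?orbF //; lia.
Qed.

Lemma coef_lin (F : comNzRingType) (c : F) m j :
  ((1 + c *: 'X)^+m)`_j = c ^+ j * 'C(m, j)%:R.
Proof.
elim: m j => [|m IH] j.
  by rewrite expr0 coefC; case: j => [|j]; rewrite ?bin0 ?bin0n ?mulr0 ?mulr1.
rewrite exprSr mulrDr mulr1 -scalerAr coefD coefZ coefMX !IH.
case: j => [|j] /=; first by rewrite !bin0 mulr0 addr0.
by rewrite binS natrD exprS; ring.
Qed.
Lemma coef_1X (F : comNzRingType) m j : ((1 + 'X)^+m)`_j = 'C(m,j)%:R :> F.
Proof. by have := coef_lin F 1 m j; rewrite scale1r expr1n mul1r. Qed.

Lemma key (F : comNzRingType) (c : F) A B n :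
  ((1 + 'X)^+A * (1 + c *: 'X)^+B)`_n =
  \sum_(i < B.+1) ((1-c)^+(B-i) * c^+i * 'C(B,i)%:R) * 'C(A+i, n)%:R.
Proof.
have E : 1 + c *: 'X = (1-c)%:P + c%:P * (1 + 'X) :> {poly F}.
  by rewrite -mul_polyC polyCB polyC1; ring.
rewrite E (exprDn _ _ B) mulr_sumr coef_sum; apply: eq_bigr => i _.
have -> : (1 + 'X) ^+ A * ((1 - c)%:P ^+ (B - i) * (c%:P * (1 + 'X)) ^+ i *+ 'C(B, i))
   = ((1-c)^+(B-i) * c^+i * 'C(B,i)%:R)%:P * (1 + 'X)^+(A+i).
  rewrite !rmorphM /= !rmorphXn /= rmorph_nat exprD -mulr_natr exprMn.
  move: ((1 - c)%:P ^+ (B - i)) (c%:P ^+ i) ((1 + 'X) ^+ A) ((1 + 'X) ^+ i) ('C(B, i)%:R : {poly F}) => u v w x y.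
  ring.
by rewrite coefCM coef_1X.
Qed.

Lemma coef_prod (F : comNzRingType) (c : F) A B n :
  ((1 + 'X)^+A * (1 + c *: 'X)^+B)`_n =
  \sum_(k < n.+1) c ^+ k * ('C(A, n - k)%:R * 'C(B, k)%:R).
Proof.
rewrite coefMr; apply: eq_bigr => k _; rewrite coef_1X coef_lin; ring.
Qed.

Lemma eval_pb p (r x : 'F_p) m : (polybinom (r *: 'X - 1) m).[x] =
  (m`!%:R)^-1 * \prod_(i < m) ((r * x - 1) - i%:R).
Proof.
rewrite /polybinom hornerZ horner_prod; congr (_ * _); apply: eq_bigr => i _.
by rewrite !hornerE.
Qed.

Theorem theorem12 (p s a a' : nat) :
  prime p -> odd p -> (0 < s)%N -> (s < p.-1)%N ->
  (0 < a)%N -> (a < p)%N -> (0 < a')%N -> (a' < p)%N ->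
  a' = s * a %[mod p] ->
  ((bpoly p 1 s).[(a%:R : 'F_p)] == 0) = (a + a' < p)%N.
Proof.
move=> pp _ s0 sp a0 ap a'0 a'p ea.
have [n pn] : exists n, p = n.+1 by exists p.-1; rewrite prednK // prime_gt0.
subst p; rewrite /= in sp.
set c : 'F_n.+1 := - (1%:R / s%:R).
have E1 : (1%:R * (a%:R : 'F_n.+1) - 1) = (a.-1)%:R.
  by rewrite mul1r -{1}(prednK a0) -natr1 addrK.
have E2 : (s%:R * (a%:R : 'F_n.+1) - 1) = (a'.-1)%:R.
  rewrite -natrM -(Fp_nat_mod pp) -ea (Fp_nat_mod pp).
  by rewrite -{1}(prednK a'0) -natr1 addrK.
have -> : (bpoly n.+1 1 s).[(a%:R : 'F_n.+1)] =
   \sum_(k < n.+1) c ^+ k * ('C(a.-1, n - k)%:R * 'C(a'.-1, k)%:R).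
  rewrite /bpoly horner_sum; apply: eq_bigr => k _.
  rewrite hornerZ hornerM !eval_pb E1 E2 !binomF //; lia.
rewrite -coef_prod key.
have ndv : forall m, (0 < m < n.+1)%N -> ~~ (n.+1 %| m)%N.
  move=> m /andP [m0 mp]; apply/negP => /dvdn_leq => /(_ m0); lia.
have ne : (a + a' != n.+1)%N.
  apply/eqP => e.
  have : (n.+1 %| s.+1 * a)%N.
    by rewrite /dvdn mulSn -modnDmr -ea modnDmr e modnn.
  rewrite Euclid_dvdM // (negbTE (ndv _ _)) ?(negbTE (ndv a _)) //; lia.
have s0F : (s%:R : 'F_n.+1) != 0 by rewrite Fp_eq0 // ndv //; lia.
move/eqP: ne => ne.
case: (ltnP (a + a')%N n.+1) => h.
  rewrite big1 ?eqxx // => i _; rewrite (@bin_small (a.-1 + i) n) ?mulr0 //.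
  have := ltn_ord i; lia.
have lt : (n - a.-1 < a'.-1.+1)%N by lia.
rewrite (bigD1 (Ordinal lt)) //= big1 ?addr0.
  rewrite subnKC ?binn ?mulr1; last by lia.
  apply/negbTE; rewrite !mulf_neq0 ?expf_neq0 ?bin_nz //; try lia.
    have e : (1 - c) * s%:R = (s.+1)%:R.
      by rewrite /c opprK mulrDl !mul1r mulVf // natr1.
    apply/eqP => e0; move: e; rewrite e0 mul0r => /eqP; rewrite eq_sym Fp_eq0 //.
    by rewrite (negbTE (ndv _ _)) //; lia.
  by rewrite /c oppr_eq0 mul1r invr_eq0.
move=> i /eqP ne'; rewrite bin_z ?mulr0 //.
  have := ltn_ord i; lia.
apply/eqP => e; apply: ne'; apply: val_inj => /=; lia.
Qed.
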